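(* If $L$ is a finite ranked lattice with at least two elements, then $\mathcal{M}(L,1)=0$.
   Context: For a finite ranked poset $\mathcal{P}$ with rank function $\mathrm{rk}$, let $\mathrm{rk}(\mathcal{P})$ be the maximum rank of an element and $\rho(x,y,z)=3\,\mathrm{rk}(\mathcal{P})-\mathrm{rk}(x)-\mathrm{rk}(y)-\mathrm{rk}(z)$. Let $\delta_3(x,y,z)=1$ if $x=y=z$ and $0$ otherwise, and let $J$ be the unique integer-valued function on triples $x\le y\le z$ of $\mathcal{P}$ with $\sum_{x\le a\le y\le b\le z}J(a,y,b)=\delta_3(x,y,z)$ for all $x\le y\le z$. Then $\mathcal{M}(\mathcal{P},t)=\sum_{x\le y\le z}J(x,y,z)\,t^{\rho(x,y,z)}$. *)

(* Defs.v *)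
From HB Require Import structures.
From mathcomp Require Import all_boot all_order all_algebra.
Set Implicit Arguments. Unset Strict Implicit. Unset Printing Implicit Defensive.
Import Order.TTheory GRing.Theory Num.Theory.
Local Open Scope order_scope.

Definition is_rank_function (d : Order.disp_t) (T : finPOrderType d)
  (rk : T -> nat) : Prop :=
  (forall x : T, (forall y : T, ~~ (y < x)) -> rk x = 0%N) /\
  (forall x y : T, x < y -> (forall z : T, ~~ ((x < z) && (z < y))) ->
      rk y = (rk x).+1).

Definition rank_of (d : Order.disp_t) (T : finPOrderType d) (rk : T -> nat) : nat :=
  (\max_(x : T) rk x)%N.

(* rho(x,y,z) = 3 rk(P) - rk x - rk y - rk z  (always >= 0) *)
Definition rho (d : Order.disp_t) (T : finPOrderType d) (rk : T -> nat)
  (x y z : T) : nat := (3 * rank_of rk - rk x - rk y - rk z)%N.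

Definition delta3 (d : Order.disp_t) (T : finPOrderType d) (x y z : T) : int :=
  if (x == y) && (y == z) then 1%R else 0%R.

Definition is_J (d : Order.disp_t) (T : finPOrderType d) (J : T -> T -> T -> int) : Prop :=
  forall x y z : T, x <= y -> y <= z ->
    (\sum_(a : T | ((x <= a)%O && (a <= y)%O))
       \sum_(b : T | ((y <= b)%O && (b <= z)%O)) J a y b)%R = delta3 x y z.

Definition Mpoly (d : Order.disp_t) (T : finPOrderType d) (rk : T -> nat)
  (J : T -> T -> T -> int) : {poly int} :=
  (\sum_(x : T) \sum_(y : T) \sum_(z : T | ((x <= y)%O && (y <= z)%O))
     (J x y z)%:P * 'X^(rho rk x y z))%R.

(* Main.v *)
Require Import Defs.
From HB Require Import structures.
From mathcomp Require Import all_boot all_order all_algebra.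
Import Order.TTheory GRing.Theory Num.Theory.

Lemma foldr_meet_le (d : Order.disp_t) (L : latticeType d) (x0 : L) (s : seq L) y :
  y \in s -> (foldr Order.meet x0 s <= y)%O.
Proof.
elim: s => //= a s IH; rewrite in_cons => /orP [/eqP -> | ys]; first exact: leIl.
exact: le_trans (leIr _ _) (IH ys).
Qed.

Lemma foldr_join_ge (d : Order.disp_t) (L : latticeType d) (x0 : L) (s : seq L) y :
  y \in s -> (y <= foldr Order.join x0 s)%O.
Proof.
elim: s => //= a s IH; rewrite in_cons => /orP [/eqP -> | ys]; first exact: leUl.
exact: le_trans (IH ys) (leUr _ _).
Qed.

Theorem proposition6p4 (d : Order.disp_t) (L : finLatticeType d)
  (rk : L -> nat) (J : L -> L -> L -> int) :
  is_rank_function rk -> (1 < #|L|)%N -> is_J J ->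
  ((Mpoly rk J).[1] = 0)%R.
Proof.
move=> _ /card_gt1P [u [v [_ _ uv]]] HJ.
set bot := foldr Order.meet u (enum L).
set top := foldr Order.join u (enum L).
have Hb : forall y : L, (bot <= y)%O by move=> y; apply: foldr_meet_le; rewrite mem_enum.
have Ht : forall y : L, (y <= top)%O by move=> y; apply: foldr_join_ge; rewrite mem_enum.
have bt : bot != top.
  apply/negP => /eqP bt; move/negP: uv; apply; apply/eqP.
  have eu : u = bot by apply/le_anti; rewrite Hb bt Ht.
  have ev : v = bot by apply/le_anti; rewrite Hb bt Ht.
  by rewrite eu ev.
rewrite /Mpoly horner_sum.
have -> : (\sum_(i : L) (\sum_(y : L) \sum_(z : L | ((i <= y)%O && (y <= z)%O))
     ((J i y z)%:P * 'X^(rho rk i y z))).[1] =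
  \sum_(y : L) \sum_(a : L | ((bot <= a)%O && (a <= y)%O))
       \sum_(b : L | ((y <= b)%O && (b <= top)%O)) J a y b)%R.
  rewrite (eq_bigr (fun i => \sum_(y : L) \sum_(z : L | ((i <= y)%O && (y <= z)%O)) J i y z)%R).
    rewrite exchange_big; apply: eq_bigr => y _.
    rewrite [RHS]big_mkcond; apply: eq_bigr => x _; rewrite Hb /=.
    case: (x <= y)%O => /=.
      by apply: eq_bigl => z; rewrite Ht andbT.
    by rewrite big_pred0.
  move=> i _; rewrite horner_sum; apply: eq_bigr => y _.
  rewrite horner_sum; apply: eq_bigr => z _.
  by rewrite hornerM hornerC hornerXn expr1n mulr1.
rewrite big1 // => y _; rewrite HJ ?Hb ?Ht // /delta3.
case: eqP => [eby|] //=; case: eqP => [eyt|] //=.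
by move: bt; rewrite eby eyt eqxx.
Qed.
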